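(* There is a constant $C$ such that every path restricted ordered bipartite graph $G=(U,V,E)$ with $n=|U|+|V|\ge 2$ vertices satisfies $|E|\le n\log_2 n + Cn$. Moreover, this bound is tight up to the constant factor: there is a constant $c>0$ such that for every $n\ge 2$ there exists a path restricted ordered bipartite graph on $n$ vertices with at least $c\,n\log n$ edges.
   Context: An ordered bipartite graph is a triple $G=(U,V,E)$ where $U$ and $V$ are disjoint finite sets, each equipped with a total order (both denoted $<$), and $E\subseteq U\times V$ is a set of edges. A forward path in $G$ is a sequence $w_0,w_1,\dots,w_m$ ($m\ge1$) of distinct vertices alternating between $U$ and $V$, with $\{w_{k-1},w_k\}\in E$ for all $k$, such that the vertices of the sequence lying in $U$ appear in strictly increasing order along the sequence and the vertices lying in $V$ also appear in strictly increasing order along the sequence (a path whose $U$-vertices and $V$-vertices are both strictly decreasing is the same path read in reverse). The range of the forward path is the pair of intervals $\langle u_a,u_b\rangle=\{u\in U: u_a\le u\le u_b\}$ and $\langle v_c,v_d\rangle=\{v\in V: v_c\le v\le v_d\}$, where $u_a,u_b$ (resp. $v_c,v_d$) are the smallest and largest $U$-vertices (resp. $V$-vertices) on the path. A back edge to such a forward path is an edge $\{w_0,x\}\in E$ where $x$ lies in the part ($U$ or $V$) not containing $w_0$ and $w_1 < x \le M$, with $M$ the largest vertex of the path in that part (so $x$ lies in the range of the path). $G$ has the path restricted property, and is called a path restricted ordered bipartite graph (PRBG), if no forward path in $G$ has a back edge in $E$. *)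

(* Defs.v *)
From mathcomp Require Import all_boot.
From Stdlib Require Import Reals.
Set Implicit Arguments. Unset Strict Implicit. Unset Printing Implicit Defensive.

(* An ordered bipartite graph with |U| = p, |V| = q: U = 'I_p, V = 'I_q with
   their natural orders (every finite totally ordered set is order-isomorphic
   to an ordinal). *)

Definition vert (p q : nat) := ('I_p + 'I_q)%type.

Definition adj (p q : nat) (E : {set 'I_p * 'I_q}) (a b : vert p q) : bool :=
  match a, b with
  | inl u, inr v => (u, v) \in E
  | inr v, inl u => (u, v) \in E
  | _, _ => false
  end.

Definition inU (p q : nat) (a : vert p q) : bool :=
  if a is inl _ then true else false.

Definition same_part (p q : nat) (a b : vert p q) : bool := inU a == inU b.

Definition vlt (p q : nat) (a b : vert p q) : bool :=
  match a, b with
  | inl u, inl u' => (val u < val u')%N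
  | inr v, inr v' => (val v < val v')%N
  | _, _ => false
  end.

Definition vle (p q : nat) (a b : vert p q) : bool :=
  match a, b with
  | inl u, inl u' => (val u <= val u')%N
  | inr v, inr v' => (val v <= val v')%N
  | _, _ => false
  end.

Definition getU (p q : nat) (a : vert p q) : option nat :=
  if a is inl u then Some (val u) else None.
Definition getV (p q : nat) (a : vert p q) : option nat :=
  if a is inr v then Some (val v) else None.

Definition forward_path (p q : nat) (E : {set 'I_p * 'I_q}) (s : seq (vert p q)) : Prop :=
  match s with
  | w0 :: w1 :: t =>
      [/\ uniq s, path (adj E) w0 (w1 :: t),
          sorted ltn (pmap (@getU p q) s) & sorted ltn (pmap (@getV p q) s)]
  | _ => False
  end.

(* A back edge to the forward path s = w_0 :: w_1 :: _ : an edge {w_0, x}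
   with x in the part of w_1 (the part not containing w_0) and
   w_1 < x <= M, M the largest vertex of the path in that part
   (x <= M is written as: x <= y for some vertex y of the path in that part). *)
Definition back_edge (p q : nat) (E : {set 'I_p * 'I_q}) (s : seq (vert p q))
  (x : vert p q) : Prop :=
  match s with
  | w0 :: w1 :: _ =>
      [/\ same_part x w1, adj E w0 x, vlt w1 x &
          exists2 y, y \in s & same_part y w1 /\ vle x y]
  | _ => False
  end.

Definition PRBG (p q : nat) (E : {set 'I_p * 'I_q}) : Prop :=
  forall (s : seq (vert p q)) (x : vert p q), forward_path E s -> ~ back_edge E s x.

Definition log2 (x : R) : R := (ln x / ln 2)%R.

(* Main.v *)
Require Import Defs.
From mathcomp Require Import all_boot.
From Stdlib Require Import Reals.
From mathcomp Require Import ssrnat zify.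
From Stdlib Require Import Lra ClassicalEpsilon.
Set Implicit Arguments. Unset Strict Implicit. Unset Printing Implicit Defensive.

Fixpoint ek (k u v : nat) : bool :=
  match k with
  | 0 => (u == 0) && (v == 0)
  | k'.+1 => let m := 2 ^ k' in
     if u < m then (if v < m then u == v else ek k' u (v - m))
     else (if v < m then ek k' (u - m) v else false)
  end.

Fixpoint hk (k u v : nat) : nat :=
  match k with
  | 0 => v.+1
  | k'.+1 => let m := 2 ^ k' in
     if u < m then (if v < m then m else m + hk k' u (v - m))
     else (if v < m then hk k' (u - m) v else 0)
  end.

Ltac cs a k := case: (ltnP a (2^k)) => ?.

Lemma ek_bound k u v : ek k u v -> u < 2 ^ k /\ v < 2 ^ k.
Proof.
elim: k u v => [|k IH] u v /=; first by case/andP => /eqP -> /eqP ->.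
rewrite expnS; have := expn_gt0 2 k.
cs u k; cs v k => //= _.
- move=> /eqP ->; lia.
- move=> /IH; lia.
- move=> /IH; lia.
Qed.

Lemma ek_sym k u v : ek k u v = ek k v u.
Proof.
elim: k u v => [|k IH] u v /=; first by rewrite andbC.
cs u k; cs v k => //=; by rewrite ?IH // eq_sym.
Qed.

Lemma hk_bound k u v : ek k u v -> hk k u v <= 2 ^ k.
Proof.
elim: k u v => [|k IH] u v /=; first by case/andP => _ /eqP ->.
rewrite expnS.
cs u k; cs v k => //=.
- move=> _; lia.
- move=> /IH; lia.
- move=> /IH; lia.
Qed.

Lemma H1k k u v : ek k u v -> v < hk k u v.
Proof.
elim: k u v => [|k IH] u v /=; first by [].
cs u k; cs v k => //=.
- move=> /IH; lia.
- move=> /IH; lia.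
Qed.

Lemma H3k k u v x : ek k u v -> ek k u x -> v < x -> hk k u v <= x.
Proof.
elim: k u v x => [|k IH] u v x /=.
  by case/andP=> _ /eqP -> /andP[_ /eqP ->].
cs u k; cs v k => //=.
- move=> /eqP <-; cs x k => //=; try (move=>/eqP; lia); try lia.
- move=> e1; cs x k => //=; first lia.
  move=> e2 lt; have := IH _ _ (x - 2^k) e1 e2; lia.
- move=> e1; cs x k => //=.
  move=> e2 lt; exact: IH e1 e2 lt.
Qed.

Ltac fin := repeat match goal with
 | |- is_true (_ == _) -> _ => move/eqP => ?
 | |- _ -> _ => move=> ? end; try lia.

Lemma H2k k u v u' v' : ek k u v -> ek k u' v -> ek k u' v' -> u < u' -> v < v' ->
  hk k u' v' <= hk k u v.
Proof.
elim: k u v u' v' => [|k IH] u v u' v' /=.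
  by case/andP=> /eqP -> /eqP -> /andP[/eqP -> _].
cs u k; cs v k => //=; cs u' k; cs v' k => //=; try by fin.
- move=> e1 e2 e3 _ _; have := hk_bound e3; lia.
- move=> e1 e2 e3 lt1 lt2; have := IH _ _ _ (v' - 2^k) e1 e2 e3 lt1; lia.
- move=> e1 e2 e3 lt1 lt2.
  have := IH _ _ _ _ e1 e2 e3; lia.
Qed.


Definition cnt k := \sum_(0 <= u < 2^k) \sum_(0 <= v < 2^k) (ek k u v : nat).

Lemma sum_eq_ind u m : \sum_(0 <= v < m) ((u == v) : nat) = (u < m).
Proof.
elim: m => [|m IH]; first by rewrite big_geq.
rewrite big_nat_recr //= IH.
case: (u =P m) => [->|/eqP h] /=; first by rewrite ltnn ltnSn.
rewrite addn0; congr nat_of_bool; apply/idP/idP => H; lia.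
Qed.

Lemma split_sum m (F : nat -> nat) :
  \sum_(0 <= i < 2 ^ m.+1) F i = \sum_(0 <= i < 2^m) F i + \sum_(0 <= i < 2^m) F (i + 2^m).
Proof.
rewrite (big_cat_nat _ (n := 2^m)) //=; last by rewrite expnS; have := expn_gt0 2 m; lia.
congr (_ + _).
rewrite -{1}(add0n (2^m)) big_addn.
by have -> : 2^m.+1 - 2^m = 2^m by rewrite expnS; lia.
Qed.

Lemma cntS k : cnt k.+1 = 2 * cnt k + 2 ^ k.
Proof.
rewrite /cnt split_sum.
have E1 : forall u, u < 2^k -> \sum_(0 <= v < 2^k.+1) (ek k.+1 u v : nat)
   = 1 + \sum_(0 <= v < 2^k) (ek k u v : nat).
  move=> u hu; rewrite split_sum /=.
  rewrite (eq_big_nat _ _ (F2 := fun v => ((u == v) : nat))); last first.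
    by move=> i /andP[_ hi]; rewrite hu hi.
  rewrite sum_eq_ind hu; congr (_ + _).
  apply: eq_big_nat => i /andP[_ hi].
  have -> : (i + 2^k < 2^k) = false by lia.
  by rewrite addnK.
have E2 : forall u, u < 2^k -> \sum_(0 <= v < 2^k.+1) (ek k.+1 (u + 2^k) v : nat)
   = \sum_(0 <= v < 2^k) (ek k u v : nat).
  move=> u hu; rewrite split_sum /=.
  have -> : (u + 2^k < 2^k) = false by lia.
  rewrite addnK.
  rewrite [X in _ + X]big1_seq ?addn0; last first.
    by move=> i _; have -> : (i + 2^k < 2^k) = false by lia.
  by apply: eq_big_nat => i /andP[_ hi]; rewrite hi.
rewrite (eq_big_nat _ _ (F1 := fun u => \sum_(0 <= v < 2^k.+1) (ek k.+1 u v : nat))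
   (F2 := fun u => 1 + \sum_(0 <= v < 2^k) (ek k u v : nat))); last first.
  by move=> i /andP[_ hi]; rewrite E1.
rewrite (eq_big_nat _ _ (F1 := fun u => \sum_(0 <= v < 2^k.+1) (ek k.+1 (u + 2^k) v : nat))
   (F2 := fun u => \sum_(0 <= v < 2^k) (ek k u v : nat))); last first.
  by move=> i /andP[_ hi]; rewrite E2.
rewrite big_split /= sum_nat_const_nat subn0; lia.
Qed.



Definition vv p q (a : vert p q) : nat := match a with inl u => val u | inr v => val v end.

Lemma adjC p q (E : {set 'I_p * 'I_q}) a b : adj E a b = adj E b a.
Proof. by case: a; case: b. Qed.

Lemma adj_part p q (E : {set 'I_p * 'I_q}) a b : adj E a b -> same_part a b = false.
Proof. by case: a; case: b. Qed.

Lemma vlt_part p q (a b : vert p q) : vlt a b -> same_part a b.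
Proof. by case: a; case: b. Qed.

Lemma vlt_vv p q (a b : vert p q) : vlt a b -> vv a < vv b.
Proof. by case: a; case: b. Qed.

Lemma vle_vv p q (a b : vert p q) : vle a b -> vv a <= vv b.
Proof. by case: a; case: b. Qed.

Lemma same_partC p q (a b : vert p q) : same_part a b = same_part b a.
Proof. by rewrite /same_part eq_sym. Qed.

Lemma same_part_trans p q (a b c : vert p q) : same_part a b -> same_part b c -> same_part a c.
Proof. by rewrite /same_part => /eqP -> /eqP ->. Qed.

Lemma fp_adj p q (E : {set 'I_p * 'I_q}) a b t : forward_path E (a :: b :: t) -> adj E a b.
Proof. by case=> _ /= /andP[]. Qed.

Lemma fp_tail p q (E : {set 'I_p * 'I_q}) a b c t :
  forward_path E (a :: b :: c :: t) -> forward_path E (b :: c :: t).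
Proof.
case=> /= /andP[_ hu] /andP[_ hp] hsu hsv; split => //.
- by case: a hsu hsv => x /= hs1 hs2 //; exact: path_sorted hs1.
- by case: a hsu hsv => x /= hs1 hs2 //; exact: path_sorted hs2.
Qed.

Lemma fp_vlt p q (E : {set 'I_p * 'I_q}) a b c t :
  forward_path E (a :: b :: c :: t) -> vlt a c.
Proof.
case=> _ /= /andP[hab /andP[hbc _]] hsu hsv.
by case: a b c hab hbc hsu hsv => x [] y [] z //= _ _; [case/andP | move=> _ /andP[]].
Qed.

Lemma fp_bound p q (E : {set 'I_p * 'I_q}) (h : vert p q -> vert p q -> nat)
  (H1 : forall a b, adj E a b -> vv b < h a b)
  (H2 : forall a b c d, adj E a b -> adj E c b -> adj E c d -> vlt a c -> vlt b d -> h c d <= h a b) :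
  forall n t a b, size t <= n -> forward_path E (a :: b :: t) ->
    forall c, c \in t -> same_part c b -> vv c < h a b.
Proof.
elim=> [|n IH] [|c1 t] a b //= hs hfp c.
case: t hs hfp => [|d t2] hs hfp.
  rewrite inE => /eqP ->; have hab := fp_adj hfp.
  have := fp_tail hfp => /fp_adj /adj_part; by rewrite same_partC => ->.
have hab := fp_adj hfp.
have hbc := fp_adj (fp_tail hfp).
have hcd := fp_adj (fp_tail (fp_tail hfp)).
have hac := fp_vlt hfp.
have hbd := fp_vlt (fp_tail hfp).
have Hd : h c1 d <= h a b by apply: H2 => //; rewrite adjC.
rewrite !inE => /orP[/eqP ->|/orP[/eqP ->|hc]].
- by move: hbc => /adj_part; rewrite same_partC => ->.
- by move=> _; apply: leq_trans (H1 _ _ hcd) Hd.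
- move=> hcb; apply: leq_trans Hd.
  apply: (IH t2 c1 d).
  + by move: hs => /=; lia.
  + exact: fp_tail (fp_tail hfp).
  + exact: hc.
  + apply: same_part_trans hcb _; exact: vlt_part hbd.
Qed.

Lemma PRBG_of_h p q (E : {set 'I_p * 'I_q}) (h : vert p q -> vert p q -> nat)
  (H1 : forall a b, adj E a b -> vv b < h a b)
  (H2 : forall a b c d, adj E a b -> adj E c b -> adj E c d -> vlt a c -> vlt b d -> h c d <= h a b)
  (H3 : forall a b x, adj E a b -> adj E a x -> vlt b x -> h a b <= vv x) : PRBG E.
Proof.
move=> [|a [|b t]] x //= hfp [hxb hax hbx [y hy [hyb hxy]]].
have hab := fp_adj hfp.
move: hy hyb hxy; rewrite !inE => /orP[/eqP ->|/orP[/eqP ->|hy]] hyb hxy.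
- by move: hab => /adj_part; rewrite hyb.
- by have := vlt_vv hbx; have := vle_vv hxy; lia.
- have := fp_bound H1 H2 (leqnn _) hfp hy hyb.
  have := H3 _ _ _ hab hax hbx; have := vle_vv hxy; lia.
Qed.


Definition Ek p q k : {set 'I_p * 'I_q} := [set e | ek k (val e.1) (val e.2)].

Definition hE p q k (a b : vert p q) : nat :=
  match a, b with
  | inl u, inr v => hk k u v
  | inr v, inl u => hk k v u
  | _, _ => 0
  end.

Lemma adjEk p q k (u : 'I_p) (v : 'I_q) : adj (Ek p q k) (inl u) (inr v) = ek k u v.
Proof. by rewrite /adj inE. Qed.
Lemma adjEk' p q k (u : 'I_p) (v : 'I_q) : adj (Ek p q k) (inr v) (inl u) = ek k v u.
Proof. by rewrite /adj inE ek_sym. Qed.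

Lemma PRBG_Ek p q k : PRBG (Ek p q k).
Proof.
apply: (@PRBG_of_h _ _ _ (hE k)).
- case=> [u|v] [u'|v'] //=; rewrite inE /= => hh; first exact: H1k hh.
  rewrite ek_sym in hh; exact: H1k hh.
- case=> [u|v] [u1|v1] // [u2|v2] // [u3|v3] //=; rewrite !inE /= => h1 h2 h3 l1 l2;
  first [exact: H2k h1 h2 h3 l1 l2 |
    rewrite ek_sym in h1; rewrite ek_sym in h2; rewrite ek_sym in h3; exact: H2k h1 h2 h3 l1 l2].
- case=> [u|v] [u1|v1] // [u2|v2] //=; rewrite !inE /= => h1 h2 l1;
  first [exact: H3k h1 h2 l1 |
    rewrite ek_sym in h1; rewrite ek_sym in h2; exact: H3k h1 h2 l1].
Qed.

Lemma card_Ek k q : 2 ^ k <= q -> #|Ek (2 ^ k) q k| = cnt k.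
Proof.
move=> hq.
rewrite -sum1_card big_mkcond /= (eq_bigr (fun e : 'I_(2^k)*'I_q => (ek k e.1 e.2 : nat))); last first.
  by move=> e _; rewrite inE; case: ek.
rewrite -(pair_bigA _ (fun (u : 'I_(2^k)) (v : 'I_q) => (ek k u v : nat))) /=.
rewrite /cnt big_mkord; apply: eq_bigr => u _.
transitivity (\sum_(0 <= v < q) (ek k u v : nat)); first by rewrite big_mkord.
rewrite (big_cat_nat _ (n := 2^k)) //=.
rewrite [X in _ + X = _]big1_seq ?addn0 //.
move=> v /andP[_]; rewrite mem_index_iota => /andP[hv _].
by case E: (ek k u v) => //; have := ek_bound E; lia.
Qed.


Lemma cnt0 : cnt 0 = 1. Proof. by rewrite /cnt /= !big_nat1. Qed.

Lemma cnt_lb k : 2 ^ k * (k + 2) <= 4 * cnt k.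
Proof.
elim: k => [|k IH]; first by rewrite cnt0.
rewrite cntS expnS; lia.
Qed.

Lemma INR_exp2 m : INR (2 ^ m) = pow 2 m.
Proof.
elim: m => [|m IH]; first by [].
rewrite expnS mult_INR IH /=; lra.
Qed.

Lemma ln2_lt1 : (ln 2 < 1)%R.
Proof.
have h := exp_ineq1 1 R1_neq_R0.
rewrite -[X in (_ < X)%R](ln_exp 1); apply: ln_increasing; lra.
Qed.

Lemma ln_le' x y : (0 < x)%R -> (x <= y)%R -> (ln x <= ln y)%R.
Proof.
move=> hx hxy; case: (Rle_lt_or_eq_dec _ _ hxy) => h.
- by apply: Rlt_le; apply: ln_increasing.
- by rewrite h; apply: Rle_refl.
Qed.

Lemma lower_part : exists c : R, (0 < c)%R /\
     forall n : nat, (2 <= n)%N ->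
       exists (p q : nat) (E : {set 'I_p * 'I_q}),
         p + q = n /\ PRBG E /\ (c * INR n * ln (INR n) <= INR #|E|)%R.
Proof.
exists (/ 16)%R; split; first lra.
move=> n hn.
have h1 := trunc_logP (isT : 1 < 2) (ltnW hn : 0 < n).
have h2 := trunc_log_ltn n (isT : 1 < 2).
move: h1 h2; set t := trunc_log 2 n => h1 h2.
have [k ht] : exists k, t = k.+1.
  case: t h2 {h1} => [|k]; last by exists k.
  rewrite expn1 => /= ?; lia.
rewrite ht in h1 h2.
exists (2 ^ k), (n - 2 ^ k), (Ek (2 ^ k) (n - 2 ^ k) k).
have hk2 : 2 ^ k.+1 = 2 * 2 ^ k by rewrite expnS.
have hk3 : 2 ^ k.+2 = 4 * 2 ^ k by rewrite !expnS; lia.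
split; first lia.
split; first exact: PRBG_Ek.
rewrite card_Ek; last lia.
have hc := cnt_lb k.
have Hn : (INR n <= INR (2 ^ k.+2))%R by apply: le_INR; apply/leP; lia.
have Hc : (INR (2 ^ k * (k + 2)) <= INR (4 * cnt k))%R by apply: le_INR; apply/leP.
rewrite !mult_INR INR_exp2 in Hc.
rewrite INR_exp2 in Hn.
have Hpos : (1 <= INR n)%R by rewrite -/(INR 1); apply: le_INR; apply/leP; lia.
have Hln0 : (0 <= ln (INR n))%R by rewrite -ln_1; apply: ln_le'; lra.
have Hln : (ln (INR n) <= INR k.+2)%R.
  apply: Rle_trans (ln_le' _ Hn) _; first lra.
  rewrite ln_pow; last lra.
  have := ln2_lt1; have : (0 <= INR k.+2)%R by apply: pos_INR.
  move=> ? ?; nra.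
have Hpk : (0 < 2 ^ k)%R by apply: pow_lt; lra.
rewrite (_ : 2 ^ k.+2 = 4 * 2 ^ k)%R in Hn; last by rewrite /=; ring.
rewrite (_ : INR (k + 2) = INR k.+2) in Hc; last by congr INR; lia.
rewrite (_ : INR 4 = 4)%R in Hc; last by rewrite /=; ring.
have : (INR n * ln (INR n) <= 4 * 2 ^ k * INR k.+2)%R.
  apply: Rmult_le_compat => //; lra.
nra.
Qed.


Lemma mem_pmapP (T U : eqType) (f : T -> option U) s x k :
  x \in s -> f x = Some k -> k \in pmap f s.
Proof. by move=> hx hf; rewrite mem_pmap -hf map_f. Qed.

Lemma sorted_all_lt (k : nat) l : sorted ltn (k :: l) -> forall j, j \in l -> k < j.
Proof. by move=> /= /(order_path_min ltn_trans) /allP. Qed.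

Lemma fp_gt p q (E : {set 'I_p * 'I_q}) x y s c :
  forward_path E (x :: y :: s) -> c \in s -> same_part c y -> vlt y c.
Proof.
case=> _ hp hsu hsv hc.
have hxy : adj E x y by case/andP: hp.
case: x y c hxy hsu hsv hc {hp} => x [] y [] c //= _ hsu hsv hc _.
- exact: (sorted_all_lt hsv (mem_pmapP hc (erefl _))).
- exact: (sorted_all_lt hsu (mem_pmapP hc (erefl _))).
Qed.

Lemma fp_pair p q (E : {set 'I_p * 'I_q}) x y : adj E x y -> forward_path E [:: x; y].
Proof. by case: x y => x [] y //= h; split => //=; rewrite ?h // inE. Qed.

Lemma fp_cons p q (E : {set 'I_p * 'I_q}) x y z s :
  adj E x y -> vlt x z -> forward_path E (y :: z :: s) -> forward_path E (x :: y :: z :: s).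
Proof.
move=> hxy hxz hfp; have [hu hp hsu hsv] := hfp.
have hxs : x \notin s.
  apply/negP => hx.
  have := fp_gt hfp hx; rewrite (vlt_part hxz) => /(_ isT).
  by have := vlt_vv hxz => h1 /vlt_vv; lia.
split.
- rewrite cons_uniq hu andbT !inE !negb_or hxs andbT; apply/andP; split.
  + by apply/eqP => e; move: hxy; rewrite e; case: (y).
  + by apply/eqP => e; move: hxz; rewrite e; case: (z) => ? /=; rewrite ltnn.
- by rewrite /= hxy.
- by case: x y z hxy hxz hsu hsv {hfp hxs hu hp} => x [] y [] z //= _ -> .
- by case: x y z hxy hxz hsu hsv {hfp hxs hu hp} => x [] y [] z //= _ -> .
Qed.


Definition pb (P : Prop) : bool := if excluded_middle_informative P then true else false.
Lemma pbP (P : Prop) : reflect P (pb P).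
Proof. by rewrite /pb; case: excluded_middle_informative => h; constructor. Qed.

Definition lastpair (T : Type) (x y : T) (s : seq T) : T * T := (last x (belast y s), last y s).

Definition Rset p q (E : {set 'I_p * 'I_q}) (x y : vert p q) : {set vert p q * vert p q} :=
  [set e | pb (exists s, forward_path E (x :: y :: s) /\ lastpair x y s = e)].

Lemma RsetP p q (E : {set 'I_p * 'I_q}) x y e :
  reflect (exists s, forward_path E (x :: y :: s) /\ lastpair x y s = e) (e \in Rset E x y).
Proof. rewrite inE; exact: pbP. Qed.

Lemma lastpair_prop p q (E : {set 'I_p * 'I_q}) x y s :
  forward_path E (x :: y :: s) ->
  [/\ (lastpair x y s).1 \in x :: y :: s, (lastpair x y s).2 \in x :: y :: s &
      adj E (lastpair x y s).1 (lastpair x y s).2].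
Proof.
case=> _ hp _ _; rewrite /lastpair /=.
case/lastP: s hp => [|s z] hp /=.
- by split; rewrite ?inE ?eqxx ?orbT //; move: hp => /= /andP[].
- rewrite belast_rcons last_rcons /=; split.
  + by rewrite inE; apply/orP; right; rewrite -cats1 -cat_cons mem_cat mem_last.
  + by rewrite !inE mem_rcons inE eqxx !orbT.
  + by move: hp; rewrite -rcons_cons rcons_path => /andP[_].
Qed.

Lemma fp_mem_ge p q (E : {set 'I_p * 'I_q}) x y s c :
  forward_path E (x :: y :: s) -> c \in x :: y :: s -> same_part c y -> vv y <= vv c.
Proof.
move=> hfp; rewrite !inE => /orP[/eqP ->|/orP[/eqP -> //|hc]].
- by move: (fp_adj hfp) => /adj_part; rewrite same_partC => ->.
- by move=> hcy; have := vlt_vv (fp_gt hfp hc hcy); lia.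
Qed.

Lemma adj_other p q (E : {set 'I_p * 'I_q}) w z y :
  adj E w z -> same_part w y || same_part z y.
Proof. by case: w z y => w [] z [] y. Qed.

Lemma R_disj p q (E : {set 'I_p * 'I_q}) x y1 y2 e :
  PRBG E -> adj E x y1 -> adj E x y2 -> vlt y1 y2 ->
  e \in Rset E x y1 -> e \in Rset E x y2 -> False.
Proof.
move=> hP h1 h2 hlt /RsetP[s1 [hf1 he1]] /RsetP[s2 [hf2 he2]].
have [m11 m12 a1] := lastpair_prop hf1.
have [m21 m22 _] := lastpair_prop hf2.
rewrite he1 in m11 m12 a1; rewrite he2 in m21 m22.
have hsp : same_part y1 y2 := vlt_part hlt.
have [c [hc1 hc2 hcy]] : exists c, [/\ c \in x :: y1 :: s1, c \in x :: y2 :: s2 & same_part c y1].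
  case/orP: (adj_other y1 a1) => h; [exists e.1 | exists e.2]; by split.
have hge := fp_mem_ge hf2 hc2 (same_part_trans hcy hsp).
move: hc1; rewrite !inE => /orP[/eqP hc|/orP[/eqP hc|hc]].
- by move: hcy; rewrite hc; move: h1 => /adj_part ->.
- by move: hge; rewrite hc; have := vlt_vv hlt; lia.
- apply: (hP _ y2 hf1); split => //; first by rewrite same_partC.
  exists c; first by rewrite !inE hc !orbT.
  split => //; move: hge hcy hsp; case: (y2) (c) (y1) => ? [] ? [] ? //=.
Qed.

Lemma R_self p q (E : {set 'I_p * 'I_q}) x y : adj E x y -> (x, y) \in Rset E x y.
Proof. by move=> h; apply/RsetP; exists [::]; split => //; exact: fp_pair. Qed.

Lemma R_sub p q (E : {set 'I_p * 'I_q}) x y z e :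
  adj E x y -> vlt x z -> e \in Rset E y z -> e \in Rset E x y.
Proof.
move=> hxy hxz /RsetP[s [hf he]]; apply/RsetP; exists (z :: s); split.
- exact: fp_cons.
- by rewrite -he /lastpair /=.
Qed.

Lemma R_notin p q (E : {set 'I_p * 'I_q}) x y z : (x, y) \notin Rset E y z.
Proof.
apply/negP => /RsetP[s [hf he]].
have [hu _ _ _] := hf.
case: he => _ hl.
move: hu; rewrite cons_uniq => /andP[/negP hn _]; apply: hn.
by rewrite -hl mem_last.
Qed.


Lemma card_bigcup_disj (I T : finType) (S : {set I}) (F : I -> {set T}) :
  (forall i j e, i \in S -> j \in S -> i != j -> e \in F i -> e \in F j -> False) ->
  #|\bigcup_(i in S) F i| = \sum_(i in S) #|F i|.
Proof.
move=> hd.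
have key : forall e, \sum_(i in S) ((e \in F i) : nat) = (e \in \bigcup_(i in S) F i).
  move=> e; case: bigcupP => [[i0 hi0 he0]|hn].
  - rewrite (bigD1 i0) //= he0 big1 // => j /andP[hj hji].
    by case E: (e \in F j) => //; case: (hd _ _ _ hj hi0 hji E he0).
  - rewrite big1 // => j hj; case E: (e \in F j) => //; case: hn; by exists j.
transitivity (\sum_(e : T) ((e \in \bigcup_(i in S) F i) : nat)).
  by rewrite -sum1_card big_mkcond /=; apply: eq_bigr => e _; case: (_ \in _).
rewrite (eq_bigr _ (fun e _ => esym (key e))) exchange_big /=.
apply: eq_bigr => i _; rewrite -sum1_card big_mkcond /=.
by rewrite [RHS]big_mkcond; apply: eq_bigr => e _; case: (_ \in _).
Qed.

Lemma sum_card_disj_le (I T : finType) (S : {set I}) (F : I -> {set T}) :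
  (forall i j e, i \in S -> j \in S -> i != j -> e \in F i -> e \in F j -> False) ->
  \sum_(i in S) #|F i| <= #|T|.
Proof. by move=> hd; rewrite -card_bigcup_disj // max_card. Qed.

Lemma prod_ineq (I : finType) (r : I -> nat) (t a : I -> nat) :
  forall k (S : {set I}), #|S| = k.+1 -> {in S &, injective r} -> {in S, forall i, 0 < t i} ->
  {in S, forall i, \sum_(j in S | r i < r j) t j < a i} ->
  4 ^ #|S| * \prod_(i in S) t i <= 16 * (\sum_(i in S) t i) ^ 2 * \prod_(i in S) a i.
Proof.
elim=> [|k IH] S hS hinj ht ha.
all: have [x0 hx0] : exists x, x \in S by apply/card_gt0P; rewrite hS.
all: case: (arg_minnP r (P := mem S) hx0) => i0 hi00 hmin.
all: have hi0 : i0 \in S by [].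
all: have hS' : #|S :\ i0| = #|S| - 1 by rewrite (cardsD1 i0 S) hi0; lia.
all: have hsum : \sum_(j in S | r i0 < r j) t j = \sum_(j in S :\ i0) t j.
all: try (apply: eq_bigl => j; rewrite !inE; case hj: (j \in S); rewrite ?andbF ?andbT //;
    apply/idP/idP => [h|h]; [apply/eqP => e; move: h; rewrite e ltnn //|
      have := hmin j hj; case: (ltngtP (r i0) (r j)) => // e _; move: h => /eqP; case;
      apply: hinj => //]).
all: have ha0 := ha _ hi0; rewrite hsum in ha0.
all: rewrite (big_setD1 i0 hi0 (F := t)) (big_setD1 i0 hi0 (F := a)) (big_setD1 i0 hi0 (F := t)) /=.
all: have ht0 := ht _ hi0.
- have E0 : S :\ i0 = set0 by apply/eqP; rewrite -cards_eq0 hS'; lia.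
  rewrite E0 in ha0 *; rewrite !big_set0 hS; rewrite big_set0 in ha0; nia.
- set T' := \sum_(i in S :\ i0) t i in ha0 *.
  set X := \prod_(i in S :\ i0) t i.
  set Y := \prod_(i in S :\ i0) a i.
  have H : 4 ^ #|S :\ i0| * X <= 16 * T' ^ 2 * Y.
    apply: IH.
    + by rewrite hS'; lia.
    + by move=> i j /setD1P[_ hi] /setD1P[_ hj]; apply: hinj.
    + by move=> i /setD1P[_ hi]; apply: ht.
    + move=> i /setD1P[hi0' hi]; have := ha _ hi.
      rewrite (eq_bigl (fun j => (j \in S :\ i0) && (r i < r j))) //.
      move=> j; rewrite !inE; case hj: (j \in S); rewrite ?andbF ?andbT //.
      case: eqP => [->|_] //=; apply/negbTE; rewrite -leqNgt; exact: hmin.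
  have hc : 4 ^ #|S| = 4 * 4 ^ #|S :\ i0| by rewrite hS' hS subn1 /= expnS.
  rewrite hc.
  have h1 : 4 * t i0 * T' <= (t i0 + T') ^ 2.
    rewrite -mulnn; case: (leqP (t i0) T') => hle; [have [d ->] : exists d, T' = t i0 + d by exists (T' - t i0); lia | have [d ->] : exists d, t i0 = T' + d by exists (t i0 - T'); lia]; nia.
  have h2 : T' <= a i0 by lia.
  have h3 : 4 * t i0 * (16 * T' ^ 2 * Y) <= 16 * (t i0 + T') ^ 2 * (a i0 * Y).
    have : 4 * t i0 * T' * T' <= (t i0 + T') ^ 2 * a i0 by apply: leq_mul.
    nia.
  apply: leq_trans h3; nia.
Qed.


Definition Nb p q (E : {set 'I_p * 'I_q}) (y : vert p q) : {set vert p q} := [set z | adj E y z].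

Lemma card_vert p q : #|{: vert p q}| = p + q.
Proof. by rewrite card_sum !card_ord. Qed.

Lemma sum_deg p q (E : {set 'I_p * 'I_q}) : \sum_(y : vert p q) #|Nb E y| = 2 * #|E|.
Proof.
have cE : #|E| = \sum_(u : 'I_p) \sum_(v : 'I_q) (((u, v) \in E) : nat).
  rewrite -sum1_card big_mkcond /= pair_bigA /=.
  by apply: eq_bigr => e _; rewrite -surjective_pairing; case: (e \in E).
have cN : forall y : vert p q, #|Nb E y| = \sum_(z : vert p q) (adj E y z : nat).
  move=> y; rewrite -sum1_card big_mkcond /=; apply: eq_bigr => z _; rewrite inE.
  by case: adj.
rewrite (eq_bigr _ (fun y _ => cN y)) big_sumType /=.
rewrite (eq_bigr (fun u => \sum_(v : 'I_q) (((u, v) \in E) : nat))); last first.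
  by move=> u _; rewrite big_sumType /= big1 ?add0n.
rewrite [X in _ + X](eq_bigr (fun v => \sum_(u : 'I_p) (((u, v) \in E) : nat))); last first.
  by move=> v _; rewrite big_sumType /= [X in _ + X]big1 ?addn0.
by rewrite [X in _ + X]exchange_big /= -cE mul2n addnn.
Qed.

Lemma nb_cmp p q (E : {set 'I_p * 'I_q}) y z1 z2 :
  adj E y z1 -> adj E y z2 -> z1 != z2 -> vlt z1 z2 || vlt z2 z1.
Proof.
case: y z1 z2 => y [] z1 [] z2 //= _ _ hne; case: (ltngtP (val z1) (val z2)) => // e;
  by move: hne; rewrite (ord_inj e) eqxx.
Qed.

Lemma nb_vlt p q (E : {set 'I_p * 'I_q}) y z w :
  adj E y z -> adj E y w -> vv z < vv w -> vlt z w.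
Proof. by case: y z w => y [] z [] w. Qed.

Lemma nb_inj p q (E : {set 'I_p * 'I_q}) y z w :
  adj E y z -> adj E y w -> vv z = vv w -> z = w.
Proof. by case: y z w => y [] z [] w //= _ _ /ord_inj ->. Qed.

Lemma nb_disj p q (E : {set 'I_p * 'I_q}) y (S : {set vert p q}) :
  PRBG E -> S \subset Nb E y ->
  forall i j e, i \in S -> j \in S -> i != j -> e \in Rset E y i -> e \in Rset E y j -> False.
Proof.
move=> hP /subsetP hS i j e hi hj hij hei hej.
have ai : adj E y i by have := hS _ hi; rewrite inE.
have aj : adj E y j by have := hS _ hj; rewrite inE.
case/orP: (nb_cmp ai aj hij) => h.
- exact: (R_disj hP ai aj h hei hej).
- exact: (R_disj hP aj ai h hej hei).
Qed.

Lemma sum_R_le p q (E : {set 'I_p * 'I_q}) y :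
  PRBG E -> \sum_(z in Nb E y) #|Rset E y z| <= (p + q) * (p + q).
Proof.
move=> hP; rewrite -card_vert -card_prod.
by apply: sum_card_disj_le; apply: nb_disj.
Qed.

Lemma child p q (E : {set 'I_p * 'I_q}) y z : PRBG E -> z \in Nb E y ->
  \sum_(w in Nb E y | vv z < vv w) #|Rset E y w| < #|Rset E z y|.
Proof.
move=> hP hz; have azy : adj E y z by rewrite inE in hz.
set S := [set w in Nb E y | vv z < vv w].
rewrite (eq_bigl (fun w => w \in S)); last by move=> w; rewrite /S !inE.
rewrite -card_bigcup_disj; last by apply: nb_disj => //; apply/subsetP => w; rewrite inE => /andP[].
apply: proper_card; apply/properP; split.
- apply/subsetP => e /bigcupP[w hwS he]; move: hwS; rewrite inE => /andP[hw hlt].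
  have hzw : vlt z w by apply: (nb_vlt azy) => //; rewrite inE in hw.
  have ayz : adj E z y by rewrite adjC.
  exact: (R_sub ayz hzw he).
- exists (z, y); first by apply: R_self; rewrite adjC.
  apply/bigcupP => -[w _]; apply/negP; exact: R_notin.
Qed.

Lemma vert_ineq p q (E : {set 'I_p * 'I_q}) y : PRBG E -> 0 < p + q ->
  4 ^ #|Nb E y| * \prod_(z in Nb E y) #|Rset E y z|
  <= 16 * (p + q) ^ 4 * \prod_(z in Nb E y) #|Rset E z y|.
Proof.
move=> hP hn.
case: (set_0Vmem (Nb E y)) => [->|[z0 hz0]].
  by rewrite cards0 !big_set0 expn0 muln1; have := expn_gt0 (p + q) 4; rewrite hn; lia.
have [k hk] : exists k, #|Nb E y| = k.+1.
  by exists #|Nb E y|.-1; rewrite prednK // card_gt0; apply/set0Pn; exists z0.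
apply: leq_trans (prod_ineq (r := @vv p q) (t := fun z => #|Rset E y z|)
                            (a := fun z => #|Rset E z y|) hk _ _ _) _.
- move=> z w; rewrite !inE => hz hw; exact: nb_inj hz hw.
- move=> z hz; rewrite card_gt0; apply/set0Pn; exists (y, z); apply: R_self.
  by rewrite inE in hz.
- move=> z hz; exact: child.
- rewrite leq_mul2r; apply/orP; right; rewrite leq_mul2l /=.
  have := sum_R_le y hP; move: (\sum_(_ in _) _) => s hs.
  have -> : (p + q) ^ 4 = ((p + q) * (p + q)) ^ 2 by rewrite mulnn -expnM.
  by rewrite leq_exp2r.
Qed.

Lemma prod_swap p q (E : {set 'I_p * 'I_q}) (f : vert p q -> vert p q -> nat) :
  \prod_(y : vert p q) \prod_(z in Nb E y) f z y = \prod_(y : vert p q) \prod_(z in Nb E y) f y z.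
Proof.
have e1 : forall g : vert p q -> vert p q -> nat,
  \prod_(y : vert p q) \prod_(z in Nb E y) g y z =
  \prod_(y : vert p q) \prod_(z : vert p q) (if adj E y z then g y z else 1).
  move=> g; apply: eq_bigr => y _; rewrite big_mkcond; apply: eq_bigr => z _; by rewrite inE.
rewrite (e1 (fun y z => f z y)) e1 exchange_big /=; apply: eq_bigr => y _.
apply: eq_bigr => z _; by rewrite adjC.
Qed.

Lemma global_ineq p q (E : {set 'I_p * 'I_q}) : PRBG E -> 0 < p + q ->
  4 ^ (2 * #|E|) <= (16 * (p + q) ^ 4) ^ (p + q).
Proof.
move=> hP hn.
have H := leq_prod (r := index_enum (vert p q)) (P := xpredT) (fun y _ => vert_ineq y hP hn).
rewrite big_split [X in _ <= X]big_split prod_nat_const card_vert prod_swap in H.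
rewrite -(big_morph (expn 4) (expnD 4) (expn0 4)) sum_deg in H.
rewrite leq_pmul2r in H; first exact: H.
apply: prodn_gt0 => y; apply: prodn_cond_gt0 => z hz.
rewrite card_gt0; apply/set0Pn; exists (z, y); apply: R_self; rewrite adjC; by rewrite inE in hz.
Qed.


Lemma nat_bound p q (E : {set 'I_p * 'I_q}) : PRBG E -> 0 < p + q ->
  2 ^ #|E| <= 2 ^ (p + q) * (p + q) ^ (p + q).
Proof.
move=> hP hn; have H := global_ineq hP hn.
rewrite -(@leq_exp2r _ _ 4) //.
have -> : (2 ^ #|E|) ^ 4 = 4 ^ (2 * #|E|) by rewrite -!expnM (_ : 4 = 2 ^ 2) // -expnM; congr expn; lia.
have -> : (2 ^ (p + q) * (p + q) ^ (p + q)) ^ 4 = (16 * (p + q) ^ 4) ^ (p + q).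
  rewrite expnMn [in RHS]expnMn; congr (_ * _).
  - by rewrite (_ : 16 = 2 ^ 4) // -!expnM mulnC.
  - by rewrite -!expnM mulnC.
exact: H.
Qed.

Lemma INR_expn m k : INR (m ^ k) = pow (INR m) k.
Proof. elim: k => [|k IH]; first by []. by rewrite expnS mult_INR IH /=. Qed.

Lemma ln_le'' x y : (0 < x)%R -> (x <= y)%R -> (ln x <= ln y)%R.
Proof.
move=> hx hxy; case: (Rle_lt_or_eq_dec _ _ hxy) => h.
- by apply: Rlt_le; apply: ln_increasing.
- by rewrite h; apply: Rle_refl.
Qed.

Lemma upper_part : exists C : R, forall (p q : nat) (E : {set 'I_p * 'I_q}),
      PRBG E -> (2 <= p + q)%N ->
      (INR #|E| <= INR (p + q) * log2 (INR (p + q)) + C * INR (p + q))%R.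
Proof.
exists 1%R => p q E hP hn.
have hb := nat_bound hP (ltnW hn).
have hR : (pow 2 #|E| <= pow 2 (p + q) * pow (INR (p + q)) (p + q))%R.
  have := le_INR _ _ (elimT leP hb); by rewrite mult_INR !INR_expn.
have hn0 : (0 < INR (p + q))%R by apply: lt_0_INR; apply/ltP; lia.
have h2 : (0 < pow 2 #|E|)%R by apply: pow_lt; lra.
have := ln_le'' h2 hR.
rewrite ln_mult; try (apply: pow_lt; lra).
rewrite !ln_pow //; try lra.
have hl2 := ln_lt_2.
move=> hh; rewrite /log2.
apply: (Rmult_le_reg_r (ln 2)); first lra.
have -> : ((INR (p + q) * (ln (INR (p + q)) / ln 2) + 1 * INR (p + q)) * ln 2 =
   INR (p + q) * ln (INR (p + q)) + INR (p + q) * ln 2)%R by field; lra.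
lra.
Qed.

Theorem theorem4p2 :
  (exists C : R, forall (p q : nat) (E : {set 'I_p * 'I_q}),
      PRBG E -> (2 <= p + q)%N ->
      (INR #|E| <= INR (p + q) * log2 (INR (p + q)) + C * INR (p + q))%R)
  /\
  (exists c : R, (0 < c)%R /\
     forall n : nat, (2 <= n)%N ->
       exists (p q : nat) (E : {set 'I_p * 'I_q}),
         p + q = n /\ PRBG E /\ (c * INR n * ln (INR n) <= INR #|E|)%R).
Proof.
split; [exact: upper_part | exact: lower_part].
Qed.
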